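(* Let $\mathcal{X}\subset\mathbb{R}^n$ be closed and convex, $\Xi\subset\mathbb{R}^m$ closed and convex, $\beta\in(0,1)$, $\varphi:\mathcal{X}\times\mathcal{X}\times\Xi\to\mathbb{R}$ bounded and continuous, and $\mathcal{Y}:\mathcal{X}\times\Xi\rightrightarrows\mathcal{X}$ nonempty-valued, compact-valued and continuous. Let $\xi_1,\ldots,\xi_N\in\Xi$ and $\mu_N=\frac1N\sum_{i=1}^N\xi_i$. Let $\mathcal{P}$ be a set of probability distributions on $\Xi$ such that $\mathbb{E}_Q[\boldsymbol{\xi}]=\mu_N$ for every $Q\in\mathcal{P}$ and the point mass $\delta_{\mu_N}\in\mathcal{P}$. If the MPC Bellman operator $B_{\mathrm{M}}$ is convexity preserving, then the DOO functional equation $$v_{\mathrm{O}}(x,\xi)=\inf_{y\in\mathcal{Y}(x,\xi)}\Bigl\{\varphi(x,y,\xi)+\beta\inf_{Q\in\mathcal{P}}\mathbb{E}_Q[v_{\mathrm{O}}(y,\boldsymbol{\xi})]\Bigr\}\quad\forall(x,\xi)\in\mathcal{X}\times\Xi$$ has a solution which is the same as the (unique bounded continuous) solution $v_{\mathrm{M}}$ of the MPC functional equation $$v_{\mathrm{M}}(x,\xi)=\inf_{y\in\mathcal{Y}(x,\xi)}\bigl\{\varphi(x,y,\xi)+\beta v_{\mathrm{M}}(y,\mu_N)\bigr\}\quad\forall(x,\xi)\in\mathcal{X}\times\Xi.$$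
   Context: $C_b(\mathcal{X}\times\Xi)$ denotes the Banach space of bounded continuous real-valued functions on $\mathcal{X}\times\Xi$ with the sup norm. The MPC Bellman operator $B_{\mathrm{M}}:C_b(\mathcal{X}\times\Xi)\to C_b(\mathcal{X}\times\Xi)$ is $B_{\mathrm{M}}(f)(x,\xi)=\inf_{y\in\mathcal{Y}(x,\xi)}\{\varphi(x,y,\xi)+\beta f(y,\mu_N)\}$. $B_{\mathrm{M}}$ is called convexity preserving if there exists a closed subset $\mathcal{F}\subset C_b(\mathcal{X}\times\Xi)$ such that $\xi\mapsto f(x,\xi)$ is convex for every $x\in\mathcal{X}$ and $f\in\mathcal{F}$, and $B_{\mathrm{M}}(\mathcal{F})\subset\mathcal{F}$. *)

(* Defs.v *)
From mathcomp Require Import all_boot all_order all_algebra.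
From mathcomp Require Import all_classical all_reals all_analysis.
Import Order.TTheory GRing.Theory Num.Theory.
Import numFieldNormedType.Exports.

Set Implicit Arguments.
Unset Strict Implicit.
Unset Printing Implicit Defensive.

Local Open Scope classical_set_scope.
Local Open Scope ring_scope.

Definition BorelV (R : realType) (k : nat) :=
  g_sigma_algebraType (@open 'rV[R]_k).

Definition convex_setV (R : realType) (k : nat) (A : set 'rV[R]_k) : Prop :=
  forall a b (t : R), A a -> A b -> 0 <= t <= 1 -> A (t *: a + (1 - t) *: b).

Definition convex_fun_on (R : realType) (k : nat) (A : set 'rV[R]_k)
    (g : 'rV[R]_k -> R) : Prop :=
  forall a b (t : R), A a -> A b -> 0 <= t <= 1 ->
    g (t *: a + (1 - t) *: b) <= t * g a + (1 - t) * g b.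

Definition bcont_on (R : realType) (n m : nat) (X : set 'rV[R]_n)
    (Xi : set 'rV[R]_m) (f : 'rV[R]_n -> 'rV[R]_m -> R) : Prop :=
  (exists M : R, forall x xi, X x -> Xi xi -> `|f x xi| <= M) /\
  {within X `*` Xi, continuous (fun p : 'rV[R]_n * 'rV[R]_m => f p.1 p.2)}.

Definition sup_cvg_on (R : realType) (n m : nat) (X : set 'rV[R]_n)
    (Xi : set 'rV[R]_m) (f_ : nat -> 'rV[R]_n -> 'rV[R]_m -> R)
    (g : 'rV[R]_n -> 'rV[R]_m -> R) : Prop :=
  forall e : R, 0 < e -> exists K : nat, forall k : nat, (K <= k)%N ->
    forall x xi, X x -> Xi xi -> `|f_ k x xi - g x xi| <= e.

(* a set F of (representatives of) elements of C_b(X x Xi) is closed in the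
   sup-norm topology (sequential closedness in the metric space C_b) *)
Definition closed_in_Cb (R : realType) (n m : nat) (X : set 'rV[R]_n)
    (Xi : set 'rV[R]_m) (F : set ('rV[R]_n -> 'rV[R]_m -> R)) : Prop :=
  forall (f_ : nat -> 'rV[R]_n -> 'rV[R]_m -> R) g,
    (forall k, F (f_ k)) -> bcont_on X Xi g -> sup_cvg_on X Xi f_ g -> F g.

Definition B_M (R : realType) (n m : nat)
    (phi : 'rV[R]_n -> 'rV[R]_n -> 'rV[R]_m -> R) (beta : R)
    (Y : 'rV[R]_n -> 'rV[R]_m -> set 'rV[R]_n) (mu : 'rV[R]_m)
    (f : 'rV[R]_n -> 'rV[R]_m -> R) : 'rV[R]_n -> 'rV[R]_m -> R :=
  fun x xi => inf [set phi x y xi + beta * f y mu | y in Y x xi].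

Definition convexity_preserving (R : realType) (n m : nat)
    (X : set 'rV[R]_n) (Xi : set 'rV[R]_m)
    (phi : 'rV[R]_n -> 'rV[R]_n -> 'rV[R]_m -> R) (beta : R)
    (Y : 'rV[R]_n -> 'rV[R]_m -> set 'rV[R]_n) (mu : 'rV[R]_m) : Prop :=
  exists F : set ('rV[R]_n -> 'rV[R]_m -> R),
    (exists f, F f) /\
    (forall f, F f -> bcont_on X Xi f) /\
    closed_in_Cb X Xi F /\
    (forall f x, F f -> X x -> convex_fun_on Xi (f x)) /\
    (forall f, F f -> F (B_M phi beta Y mu f)).

Definition MPC_solution (R : realType) (n m : nat)
    (X : set 'rV[R]_n) (Xi : set 'rV[R]_m)
    (phi : 'rV[R]_n -> 'rV[R]_n -> 'rV[R]_m -> R) (beta : R)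
    (Y : 'rV[R]_n -> 'rV[R]_m -> set 'rV[R]_n) (mu : 'rV[R]_m)
    (v : 'rV[R]_n -> 'rV[R]_m -> R) : Prop :=
  forall x xi, X x -> Xi xi ->
    v x xi = inf [set phi x y xi + beta * v y mu | y in Y x xi].

(* DOO functional equation; E_Q[v(y, xi)] is the integral over Xi
   (Q is concentrated on Xi) *)
Definition DOO_solution (R : realType) (n m : nat)
    (X : set 'rV[R]_n) (Xi : set 'rV[R]_m)
    (phi : 'rV[R]_n -> 'rV[R]_n -> 'rV[R]_m -> R) (beta : R)
    (Y : 'rV[R]_n -> 'rV[R]_m -> set 'rV[R]_n)
    (P : set (probability (BorelV R m) R))
    (v : 'rV[R]_n -> 'rV[R]_m -> R) : Prop :=
  forall x xi, X x -> Xi xi ->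
    v x xi = inf [set phi x y xi +
                      beta * inf [set Rintegral Q Xi (v y) | Q in P]
                 | y in Y x xi].

(* Main.v *)
Require Import Defs.
From mathcomp Require Import all_boot all_order all_algebra.
From mathcomp Require Import all_classical all_reals all_analysis.
Import Order.TTheory GRing.Theory Num.Theory.
Import numFieldNormedType.Exports.
Local Open Scope classical_set_scope.
Local Open Scope ring_scope.
From mathcomp Require Import ring lra.
Lemma inf_close (R : realType) (T : Type) (S : set T) (a b : T -> R) (c : R) :
  S !=set0 -> (exists l, forall y, S y -> l <= a y) ->
  (forall y, S y -> a y <= b y + c) -> inf (a @` S) <= inf (b @` S) + c.
Proof.
move=> [y0 Sy0] [l hl] hab.
rewrite -lerBlDr; apply: lb_le_inf; first by exists (b y0), y0.
move=> _ [y Sy <-]; rewrite lerBlDr; apply: le_trans (hab y Sy).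
apply: ge_inf; last by exists y.
by exists l => _ [z Sz <-]; exact: hl.
Qed.

Lemma geo_small (R : realType) (beta : R) : 0 <= beta < 1 ->
  forall e, 0 < e -> exists K, forall k, (K <= k)%N -> beta ^+ k < e.
Proof.
move=> /andP[b0 b1] e e0.
have := @cvg_expr R beta; rewrite ger0_norm // => /(_ b1).
move=> /cvgr0Pnorm_lt /(_ e e0) [K _ HK]; exists K => k Kk.
by have := HK k Kk; rewrite /= ger0_norm // exprn_ge0.
Qed.

Lemma geo_le0 (R : realType) (beta x c : R) : 0 <= beta < 1 ->
  (forall k, x <= beta ^+ k * c) -> x <= 0.
Proof.
move=> hb hx; rewrite leNgt; apply/negP => x0.
have c0 : 0 < c.
  have := hx 0%N; rewrite expr0 mul1r => /(lt_le_trans x0).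
  done.
have [K HK] := @geo_small R beta hb _ (divr_gt0 x0 c0).
have := HK K (leqnn K); rewrite ltr_pdivlMr // => /(le_lt_trans (hx K)).
by rewrite ltxx.
Qed.
Lemma within_ball (R : realType) (T : pseudoMetricType R) (A : set T) (f : T -> R) :
  {within A, continuous f} <->
  (forall p, A p -> forall e, 0 < e -> exists2 d, 0 < d &
     forall q, A q -> ball p d q -> `|f p - f q| < e).
Proof.
rewrite subspace_continuousP; split.
  move=> hc p Ap e e0.
  have := hc p Ap; move=> /cvgrPdist_lt /(_ e e0).
  rewrite /within /= => /nbhs_ballP [d d0 hd]; exists d => // q Aq pq.
  exact: hd.
move=> hc p Ap; apply/cvgrPdist_lt => e e0.
have [d d0 hd] := hc p Ap e e0.
rewrite /within /=; apply/nbhs_ballP; exists d => // q pq Aq.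
exact: hd.
Qed.
Lemma BM_close (R : realType) (n m : nat) (X : set 'rV[R]_n)
  (phi : 'rV[R]_n -> 'rV[R]_n -> 'rV[R]_m -> R) (beta : R)
  (Y : 'rV[R]_n -> 'rV[R]_m -> set 'rV[R]_n) (mu : 'rV[R]_m)
  (f g : 'rV[R]_n -> 'rV[R]_m -> R) x xi (Mp D : R) :
  0 <= beta -> Y x xi !=set0 -> Y x xi `<=` X ->
  (forall y, X y -> `|phi x y xi| <= Mp) ->
  (exists Mf, forall y, X y -> `|f y mu| <= Mf) ->
  (exists Mg, forall y, X y -> `|g y mu| <= Mg) ->
  (forall y, X y -> `|f y mu - g y mu| <= D) ->
  `|B_M phi beta Y mu f x xi - B_M phi beta Y mu g x xi| <= beta * D.
Proof.
move=> b0 Yne YX hp [Mf hf] [Mg hg] hfg; rewrite /B_M.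
have lbf : forall h Mh, (forall y, X y -> `|h y mu| <= Mh) ->
   exists l, forall y, Y x xi y -> l <= phi x y xi + beta * h y mu.
  move=> h Mh hh; exists (- Mp - beta * Mh) => y /YX Xy.
  apply: lerD.
    by have := hp y Xy; rewrite ler_norml => /andP[].
  rewrite -mulrN ler_wpM2l //.
  by have := hh y Xy; rewrite ler_norml => /andP[].
rewrite ler_distl; apply/andP; split.
  rewrite lerBlDr; apply: inf_close => //; first exact: lbf hg.
  move=> y /YX Xy; rewrite -addrA lerD2l -mulrDr ler_wpM2l //.
  by have := hfg y Xy; rewrite distrC ler_distl => /andP[_]; rewrite addrC.
apply: inf_close => //; first exact: lbf hf.
move=> y /YX Xy; rewrite -addrA lerD2l -mulrDr ler_wpM2l //.
by have := hfg y Xy; rewrite ler_distl => /andP[_]; rewrite addrC.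
Qed.
Lemma MPC_unique (R : realType) (n m : nat) (X : set 'rV[R]_n) (Xi : set 'rV[R]_m)
  (phi : 'rV[R]_n -> 'rV[R]_n -> 'rV[R]_m -> R) (beta : R)
  (Y : 'rV[R]_n -> 'rV[R]_m -> set 'rV[R]_n) (mu : 'rV[R]_m) (Mp : R) :
  Xi mu -> 0 <= beta < 1 ->
  (forall x y xi, X x -> X y -> Xi xi -> `|phi x y xi| <= Mp) ->
  (forall x xi, X x -> Xi xi -> Y x xi `<=` X) ->
  (forall x xi, X x -> Xi xi -> Y x xi !=set0) ->
  forall w v, bcont_on X Xi w -> bcont_on X Xi v ->
  MPC_solution X Xi phi beta Y mu w -> MPC_solution X Xi phi beta Y mu v ->
  forall x xi, X x -> Xi xi -> w x xi = v x xi.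
Proof.
move=> Ximu hb hp hYs hYn w v [[Mw hw] _] [[Mv hv] _] sw sv.
have key : forall k x xi, X x -> Xi xi -> `|w x xi - v x xi| <= beta ^+ k * (Mw + Mv).
  elim=> [|k IH] x xi Xx Xxi.
    rewrite expr0 mul1r; apply: le_trans (ler_normB _ _) _.
    by apply: lerD; [exact: hw | exact: hv].
  rewrite (sw x xi Xx Xxi) (sv x xi Xx Xxi) exprS -mulrA.
  have /andP[b0 _] := hb.
  apply: (@BM_close R n m X) => //.
  - exact: hYn.
  - exact: hYs.
  - by move=> y Xy; exact: hp.
  - by exists Mw => y Xy; exact: hw.
  - by exists Mv => y Xy; exact: hv.
  - by move=> y Xy; exact: IH.
move=> x xi Xx Xxi; apply/eqP; rewrite -subr_eq0 -normr_le0.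
exact: (@geo_le0 _ _ _ _ hb (fun k => key k x xi Xx Xxi)).
Qed.
Lemma geo_limit (R : realType) (T : Type) (S : set T) (fk : nat -> T -> R)
  (beta c0 : R) : 0 <= beta < 1 -> 0 <= c0 ->
  (forall k p, S p -> `|fk k.+1 p - fk k p| <= beta ^+ k * c0) ->
  exists g : T -> R, exists c : R, 0 <= c /\
    forall k p, S p -> `|fk k p - g p| <= beta ^+ k * c.
Proof.
move=> /andP[b0 b1] c00 hstep.
have b1' : 0 < 1 - beta by rewrite subr_gt0.
set c := c0 / (1 - beta).
have c0E : c0 = c - beta * c.
  by rewrite -{1}(mul1r c) -mulrBl /c mulrC divfK // gt_eqF.
have E : forall i, beta ^+ i * c0 = beta ^+ i * c - beta ^+ i.+1 * c.
  by move=> i; rewrite c0E exprS; ring.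
have c_ge0 : 0 <= c by rewrite /c divr_ge0 // ltW.
pose u p k := fk k p + beta ^+ k * c.
pose w p k := fk k p - beta ^+ k * c.
exists (fun p => inf (range (u p))), c; split => // k p Sp.
have hu : {homo u p : i j / (i <= j)%N >-> j <= i}.
  apply/nonincreasing_seqP => i; rewrite /u.
  have := hstep i p Sp; rewrite ler_norml E => /andP[_ h]; lra.
have hw : {homo w p : i j / (i <= j)%N >-> i <= j}.
  apply/nondecreasing_seqP => i; rewrite /w.
  have := hstep i p Sp; rewrite ler_norml E => /andP[h _]; lra.
have wu : forall i, w p i <= u p i.
  move=> i; rewrite /w /u lerD2l lerNl.
  by apply: le_trans (mulr_ge0 (exprn_ge0 _ b0) c_ge0); rewrite oppr_le0 mulr_ge0 // exprn_ge0.
have hlb : has_lbound (range (u p)).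
  by exists (w p 0%N) => _ [i _ <-]; apply: le_trans (wu i); exact: hw.
rewrite distrC ler_distl; apply/andP; split.
  apply: lb_le_inf; first by exists (u p 0%N), 0%N.
  move=> _ [l _ <-].
  apply: le_trans (hw _ _ (leq_maxl k l)) _.
  apply: le_trans (wu _) _.
  exact: hu (leq_maxr k l).
apply: ge_inf => //; by exists k.
Qed.
Lemma tri3 (R : realType) (a b c d : R) :
  `|a - b| <= `|c - a| + `|c - d| + `|d - b|.
Proof.
rewrite (_ : a - b = - (c - a) + (c - d) + (d - b)); last by ring.
apply: le_trans (ler_normD _ _) _; rewrite lerD2r.
by apply: le_trans (ler_normD _ _) _; rewrite normrN.
Qed.

Lemma MPC_exists (R : realType) (n m : nat) (X : set 'rV[R]_n) (Xi : set 'rV[R]_m)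
  (phi : 'rV[R]_n -> 'rV[R]_n -> 'rV[R]_m -> R) (beta : R)
  (Y : 'rV[R]_n -> 'rV[R]_m -> set 'rV[R]_n) (mu : 'rV[R]_m) (Mp : R)
  (F : set ('rV[R]_n -> 'rV[R]_m -> R)) :
  Xi mu -> 0 <= beta < 1 ->
  (forall x y xi, X x -> X y -> Xi xi -> `|phi x y xi| <= Mp) ->
  (forall x xi, X x -> Xi xi -> Y x xi `<=` X) ->
  (forall x xi, X x -> Xi xi -> Y x xi !=set0) ->
  (exists f, F f) -> (forall f, F f -> bcont_on X Xi f) ->
  closed_in_Cb X Xi F -> (forall f, F f -> F (B_M phi beta Y mu f)) ->
  exists g, F g /\ MPC_solution X Xi phi beta Y mu g.
Proof.
move=> Ximu hb hp hYs hYn [f0 Ff0] Fb Fcl FB.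
have /andP[b0 b1] := hb.
pose fk k := iter k (B_M phi beta Y mu) f0.
have Ffk : forall k, F (fk k) by elim=> [|k IH] //=; exact: FB.
have [[M0 h0] _] := Fb _ (Ffk 0%N).
have [[M1 h1] _] := Fb _ (Ffk 1%N).
have bnd : forall k, exists M, forall y, X y -> `|fk k y mu| <= M.
  by move=> k; have [[M hM] _] := Fb _ (Ffk k); exists M => y Xy; exact: hM.
have hstep : forall k (p : 'rV[R]_n * 'rV[R]_m), (X `*` Xi) p ->
    `|fk k.+1 p.1 p.2 - fk k p.1 p.2| <= beta ^+ k * (`|M0| + `|M1|).
  elim=> [|k IH] [x xi] [/= Xx Xxi].
    rewrite expr0 mul1r; apply: le_trans (ler_normB _ _) _.
    rewrite (addrC `|M0|); apply: lerD; [apply: le_trans (h1 _ _ Xx Xxi) _ | apply: le_trans (h0 _ _ Xx Xxi) _];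
      exact: ler_norm.
  rewrite exprS -mulrA.
  change (`|B_M phi beta Y mu (fk k.+1) x xi - B_M phi beta Y mu (fk k) x xi| <=
     beta * (beta ^+ k * (`|M0| + `|M1|))).
  apply: (@BM_close R n m X) => //.
  - exact: hYn.
  - exact: hYs.
  - by move=> y Xy; exact: hp.
  - by move=> y Xy; exact: (IH (y, mu)).
have [G [c [c_ge0 hG]]] := @geo_limit R _ (X `*` Xi)
   (fun k p => fk k p.1 p.2) beta (`|M0| + `|M1|) hb (addr_ge0 (normr_ge0 _) (normr_ge0 _)) hstep.
pose g x xi := G (x, xi).
have hg : forall k x xi, X x -> Xi xi -> `|fk k x xi - g x xi| <= beta ^+ k * c.
  by move=> k x xi Xx Xxi; exact: (hG k (x, xi)).
have small : forall e, 0 < e -> exists K, forall k, (K <= k)%N -> beta ^+ k * c < e.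
  move=> e e0; have c1 : 0 < c + 1 by rewrite ltr_wpDl.
  have [K HK] := @geo_small R beta hb _ (divr_gt0 e0 c1).
  exists K => k Kk; apply: (@le_lt_trans _ _ (beta ^+ k * (c + 1))).
    by rewrite ler_wpM2l ?exprn_ge0 // lerDl.
  by rewrite -ltr_pdivlMr // HK.
have gb : bcont_on X Xi g.
  split.
    exists (M0 + c) => x xi Xx Xxi.
    have := hg 0%N x xi Xx Xxi; rewrite expr0 mul1r => h.
    have := h0 x xi Xx Xxi => h'.
    rewrite (_ : g x xi = fk 0%N x xi - (fk 0%N x xi - g x xi)); last by ring.
    by apply: le_trans (ler_normB _ _) _; rewrite lerD.
  apply/within_ball => p [Xp1 Xp2] e e0.
  have e3 : 0 < e / 3 by rewrite divr_gt0.
  have [K HK] := small _ e3.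
  have [_ cK] := Fb _ (Ffk K).
  move/within_ball: cK => cK.
  have [d d0 hd] := cK p (conj Xp1 Xp2) _ e3.
  exists d => // q [Xq1 Xq2] pq.
  have h1' := hg K p.1 p.2 Xp1 Xp2.
  have h2' := hg K q.1 q.2 Xq1 Xq2.
  have h3' := hd q (conj Xq1 Xq2) pq.
  have hK := HK K (leqnn K).
  rewrite /= in h3'.
  have : `|g p.1 p.2 - g q.1 q.2| <= `|fk K p.1 p.2 - g p.1 p.2| +
     `|fk K p.1 p.2 - fk K q.1 q.2| + `|fk K q.1 q.2 - g q.1 q.2|.
    exact: tri3.
  move=> ht; lra.
have Fg : F g.
  apply: (Fcl fk) => // e e0.
  have [K HK] := small _ e0; exists K => k Kk x xi Xx Xxi.
  exact: le_trans (hg k x xi Xx Xxi) (ltW (HK k Kk)).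
exists g; split => // x xi Xx Xxi.
have [[Mg hMg] _] := gb.
have [[MBg hMBg] _] := Fb _ (FB _ Fg).
have key : forall k, `|g x xi - B_M phi beta Y mu g x xi| <= beta ^+ k * (c + c).
  move=> k.
  have e1 : `|fk k.+1 x xi - g x xi| <= beta ^+ k.+1 * c := hg k.+1 x xi Xx Xxi.
  have e2 : `|B_M phi beta Y mu (fk k) x xi - B_M phi beta Y mu g x xi| <= beta * (beta ^+ k * c).
    apply: (@BM_close R n m X) => //.
    - exact: hYn.
    - exact: hYs.
    - by move=> y Xy; exact: hp.
    - by exists Mg => y Xy; exact: hMg.
    - by move=> y Xy; exact: hg.
  rewrite mulrA -exprS in e2.
  change (B_M phi beta Y mu (fk k) x xi) with (fk k.+1 x xi) in e2.
  rewrite mulrDr.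
  rewrite (_ : g x xi - B_M phi beta Y mu g x xi = (fk k.+1 x xi - B_M phi beta Y mu g x xi) - (fk k.+1 x xi - g x xi)); last by ring.
  apply: le_trans (ler_normB _ _) _.
  have bk : beta ^+ k.+1 * c <= beta ^+ k * c.
    by rewrite ler_wpM2r // exprS ler_piMl ?exprn_ge0 // ltW.
  rewrite addrC lerD //; apply: le_trans bk; done.
apply/eqP; rewrite -subr_eq0 -normr_le0.
exact: (@geo_le0 _ _ _ _ hb key).
Qed.
Lemma open_measV (R : realType) (m : nat) (U : set 'rV[R]_m) :
  open U -> measurable (U : set (BorelV R m)).
Proof. by move=> oU; apply: sub_sigma_algebra. Qed.

Lemma closed_measV (R : realType) (m : nat) (U : set 'rV[R]_m) :
  closed U -> measurable (U : set (BorelV R m)).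
Proof.
move=> cU; rewrite -[U]setCK; apply: measurableC; apply: open_measV.
exact: closed_openC.
Qed.

Lemma dirac_in (R : realType) (m : nat) (Xi : set 'rV[R]_m) (mu : 'rV[R]_m)
  (Q : probability (BorelV R m) R) : closed Xi -> Q (Xi : set (BorelV R m)) = 1%E ->
  (forall A : set (BorelV R m), measurable A -> Q A = \d_(mu : BorelV R m) A) -> Xi mu.
Proof.
move=> cXi QXi hQ; have := hQ _ (@closed_measV R m Xi cXi); rewrite QXi diracE.
by case: (boolP (mu \in Xi)) => [/set_mem //|_] /= [/eqP]; rewrite oner_eq0.
Qed.
Lemma cont_measV (R : realType) (m : nat) (D : set 'rV[R]_m) (f : 'rV[R]_m -> R) :
  measurable (D : set (BorelV R m)) -> {within D, continuous f} ->
  measurable_fun (D : set (BorelV R m)) f.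
Proof.
move=> mD /continuousP cf; apply: (measurability _ (measurable_realfun.RGenOpens.measurableE R)).
move=> _ [_ [a [b ->] <-]].
have := cf _ (@interval_open R (BRight a) (BLeft b) erefl erefl) => /open_subspaceP [V oV VD].
rewrite /= setIC.
have -> : (f @^-1` `]a, b[%classic) `&` D = V `&` D by rewrite -VD.
apply: measurableI => //; exact: sub_sigma_algebra.
Qed.
Lemma affine_int (R : realType) (m : nat) (Q : probability (BorelV R m) R)
  (mu : 'rV[R]_m)
  (hmean : forall j : 'I_m,
      Q.-integrable setT (fun z : BorelV R m => (z ord0 j)%:E) /\
      Rintegral Q setT (fun z : BorelV R m => z ord0 j) = mu ord0 j)
  (alpha : R) (a : 'rV[R]_m) :
  Q.-integrable setT (EFin \o (fun z : BorelV R m => alpha + \sum_(j < m) a ord0 j * z ord0 j)) /\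
  Rintegral Q setT (fun z : BorelV R m => alpha + \sum_(j < m) a ord0 j * z ord0 j)
    = alpha + \sum_(j < m) a ord0 j * mu ord0 j.
Proof.
have hs : forall s : seq 'I_m,
  Q.-integrable setT (EFin \o (fun z : BorelV R m => \sum_(j <- s) a ord0 j * z ord0 j)) /\
  Rintegral Q setT (fun z : BorelV R m => \sum_(j <- s) a ord0 j * z ord0 j)
    = \sum_(j <- s) a ord0 j * mu ord0 j.
  elim=> [|j s [IHi IHe]].
    have -> : (fun z : BorelV R m => \sum_(j <- [::]) a ord0 j * z ord0 j) = cst 0.
      by apply/funext => z; rewrite big_nil.
    rewrite big_nil; split; first exact: finite_measure_integrable_cst.
    by rewrite Rintegral_cst // mul0r.
  have -> : (fun z : BorelV R m => \sum_(i <- j :: s) a ord0 i * z ord0 i) =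
      (fun z => a ord0 j * z ord0 j + \sum_(i <- s) a ord0 i * z ord0 i).
    by apply/funext => z; rewrite big_cons.
  have [hj1 hj2] := hmean j.
  have ij : Q.-integrable setT (EFin \o (fun z : BorelV R m => a ord0 j * z ord0 j)).
    apply: (eq_integrable _ (fun x : BorelV R m => ((a ord0 j)%:E * (x ord0 j)%:E)%E)) => //.
    exact: integrableZl.
  split.
    apply: (eq_integrable _ (fun x : BorelV R m => ((a ord0 j * x ord0 j)%:E + (\sum_(i <- s) a ord0 i * x ord0 i)%:E)%E)) => //.
    exact: integrableD.
  rewrite RintegralD // IHe big_cons; congr (_ + _).
  by rewrite RintegralZl // hj2.
have [hi he] := hs (index_enum 'I_m).
split.
  apply: (eq_integrable _ (fun x : BorelV R m => (alpha%:E + (\sum_(i <- index_enum 'I_m) a ord0 i * x ord0 i)%:E)%E)) => //.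
  apply: integrableD => //; exact: finite_measure_integrable_cst.
rewrite RintegralD //; last exact: finite_measure_integrable_cst.
rewrite Rintegral_cst //.
rewrite (_ : fine _ = 1); last exact: (congr1 fine (probability_setT Q)).
rewrite mulr1; congr (_ + _).
exact: he.
Qed.
Lemma int_ge_affine (R : realType) (m : nat) (Q : probability (BorelV R m) R)
  (Xi : set 'rV[R]_m) (mu : 'rV[R]_m) :
  closed Xi -> Q (Xi : set (BorelV R m)) = 1%E ->
  (forall j : 'I_m,
      Q.-integrable setT (fun z : BorelV R m => (z ord0 j)%:E) /\
      Rintegral Q setT (fun z : BorelV R m => z ord0 j) = mu ord0 j) ->
  forall (G : 'rV[R]_m -> R) (MG : R), (forall z, Xi z -> `|G z| <= MG) ->
  {within Xi, continuous G} ->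
  forall (alpha : R) (a : 'rV[R]_m),
  (forall z, Xi z -> alpha + \sum_(j < m) a ord0 j * z ord0 j <= G z) ->
  alpha + \sum_(j < m) a ord0 j * mu ord0 j <= Rintegral Q Xi G.
Proof.
move=> cXi QXi hmean G MG hGb hGc alpha a hle.
have [li le] := @affine_int R m Q mu hmean alpha a.
have mXi : measurable (Xi : set (BorelV R m)) := @closed_measV R m Xi cXi.
have mC : measurable (~` Xi : set (BorelV R m)) := measurableC mXi.
have QC : Q (~` Xi : set (BorelV R m)) = 0%E.
  rewrite probability_setC // (_ : Q _ = 1%E) ?subee //; exact: QXi.
have Gi : Q.-integrable Xi (EFin \o G).
  apply: measurable_bounded_integrable => //.
  - exact: (le_lt_trans (probability_le1 Q mXi) (ltry _)).
  - exact: (@cont_measV R m).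
  - exists MG; split; first exact: num_real.
    move=> M MGM x Xx; apply: le_trans (hGb x Xx) _; exact: ltW.
have liX : Q.-integrable Xi (EFin \o (fun z : BorelV R m => alpha + \sum_(j < m) a ord0 j * z ord0 j)).
  exact: integrableS li.
rewrite -le.
have -> : Rintegral Q setT (fun z : BorelV R m => alpha + \sum_(j < m) a ord0 j * z ord0 j) =
    Rintegral Q Xi (fun z : BorelV R m => alpha + \sum_(j < m) a ord0 j * z ord0 j).
  rewrite -(setUv (Xi : set (BorelV R m))) Rintegral_setU //; last first.
  - by rewrite /disj_set setICr.
  - by rewrite setUv.
  rewrite [X in _ + X](_ : _ = 0) ?addr0 //.
  rewrite /Rintegral null_set_integral //.
  apply: measurable_int; apply: integrableS li => //.
exact: le_Rintegral.
Qed.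
Lemma lam_lemma (R : realType) (A B : R) :
  (forall l, 0 < l <= 1 -> 0 <= 2 * A + l * B) -> 0 <= A.
Proof.
move=> h; rewrite leNgt; apply/negP => A0.
have [B0|B0] := leP B 0.
  have := h 1; rewrite ltr01 lexx mul1r => /(_ isT); lra.
pose l := Num.min 1 (- A / B).
have l0 : 0 < l by rewrite lt_min ltr01 /= divr_gt0 // oppr_gt0.
have l1 : l <= 1 by rewrite ge_min lexx.
have := h l; rewrite l0 l1 => /(_ isT).
have : l * B <= - A by rewrite -ler_pdivlMr // ge_min lexx orbT.
lra.
Qed.

Lemma sum_sq_expand (R : realType) (m : nat) (a d : 'I_m -> R) (l : R) :
  \sum_(j < m) (a j + l * d j) ^+ 2 =
  \sum_(j < m) a j ^+ 2 + 2 * l * \sum_(j < m) a j * d j + l ^+ 2 * \sum_(j < m) d j ^+ 2.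
Proof.
rewrite mulr_sumr [X in _ + X]mulr_sumr -!big_split /=.
by apply: eq_bigr => j _; ring.
Qed.
Lemma affine_minorant (R : realType) (m : nat) (Xi : set 'rV[R]_m)
  (G : 'rV[R]_m -> R) (mu : 'rV[R]_m) (eps : R) :
  closed Xi -> convex_setV Xi -> convex_fun_on Xi G ->
  {within Xi, continuous G} -> Xi mu -> 0 < eps ->
  exists (alpha : R) (c : 'rV[R]_m),
    (forall z, Xi z -> alpha + \sum_(j < m) c ord0 j * z ord0 j <= G z) /\
    G mu - eps <= alpha + \sum_(j < m) c ord0 j * mu ord0 j.
Proof.
move=> cXi cvXi cvG cG Ximu e0.
set s := G mu - eps.
pose P (t : R) := Num.max t 0.
pose hq (z : 'rV[R]_m) := \sum_(j < m) (z ord0 j - mu ord0 j) ^+ 2.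
pose h z := hq z + P (G z - s) ^+ 2.
have P0 : forall t, 0 <= P t by move=> t; rewrite le_max lexx orbT.
have hq0 : forall z, 0 <= hq z by move=> z; apply: sumr_ge0 => j _; exact: sqr_ge0.
have hmu : h mu = eps ^+ 2.
  rewrite /h /hq big1 ?add0r; last by move=> j _; rewrite subrr expr0n.
  by rewrite /P /s opprB addrCA subrr addr0 max_l // ltW.
have chq : continuous hq.
  have : forall r : seq 'I_m, continuous (fun z : 'rV[R]_m => \sum_(j <- r) (z ord0 j - mu ord0 j) ^+ 2).
    elim=> [|j r IH].
      have -> : (fun z : 'rV[R]_m => \sum_(j <- [::]) (z ord0 j - mu ord0 j) ^+ 2) = fun=> 0.
        by apply/funext => z; rewrite big_nil.
      exact: cst_continuous.
    have -> : (fun z : 'rV[R]_m => \sum_(i <- j :: r) (z ord0 i - mu ord0 i) ^+ 2) =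
       ((fun z : 'rV[R]_m => (z ord0 j - mu ord0 j) * (z ord0 j - mu ord0 j)) + (fun z : 'rV[R]_m => \sum_(i <- r) (z ord0 i - mu ord0 i) ^+ 2) : 'rV[R]_m -> R).
      by apply/funext => z; rewrite big_cons /= expr2.
    move=> z; apply: continuousD; last exact: IH.
    have cc : {for z, continuous (fun z : 'rV[R]_m => z ord0 j - mu ord0 j)}.
      apply: (@continuousB _ _ _ (fun z : 'rV[R]_m => z ord0 j) (fun=> mu ord0 j)).
        exact: coord_continuous.
      exact: cst_continuous.
    exact: continuousM.
  by move=> /(_ (index_enum 'I_m)).
have ch : {within Xi, continuous h}.
  move=> z.
  apply: (@continuousD _ _ _ (from_subspace Xi hq) (from_subspace Xi (fun z => P (G z - s) ^+ 2))).
    exact: (continuous_subspaceT chq).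
  have cP : {within Xi, continuous (fun z => P (G z - s))}.
    move=> y; rewrite /P.
    apply: (@continuous_max _ _ (fun z : subspace Xi => G z - s) (fun=> 0)); last exact: cst_continuous.
    apply: (@continuousB _ _ _ (from_subspace Xi G) (fun=> s)); [exact: cG | exact: cst_continuous].
  exact: (@continuous_comp _ _ _ (from_subspace Xi (fun z => P (G z - s))) (fun x : R => x ^+ 2) z (cP z) (@exprn_continuous R 2 _)).
pose K := Xi `&` [set z | hq z <= eps ^+ 2].
have KXi : K `<=` Xi by move=> z [].
have Kmu : K mu.
  split => //=; rewrite /hq big1 ?sqr_ge0 // => j _; by rewrite subrr expr0n.
have cK : compact K.
  apply: bounded_closed_compact; last first.
    apply: closedI => //.
    exact: (proj1 (continuous_closedP hq) chq _ (@closed_le R (eps ^+ 2))).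
  exists (eps + \sum_(j < m) `|mu ord0 j|); split; first exact: num_real.
  move=> M hM z [_ Kz]; apply: ltW; apply: le_lt_trans hM.
  rewrite (_ : `|z| = mx_norm z) // mx_normrE; apply: bigmax_le => [|[i j] _ /=].
    by apply: addr_ge0; [exact: ltW | apply: sumr_ge0 => k _; exact: normr_ge0].
  rewrite (_ : i = ord0); last by apply/val_inj; case: i => -[].
  have hj : `|z ord0 j - mu ord0 j| <= eps.
    rewrite -(@ler_pXn2r _ 2) //; last by rewrite nnegrE ltW.
    apply: le_trans Kz; rewrite real_normK ?num_real //.
    rewrite /hq (bigD1 j) //= lerDl; apply: sumr_ge0 => k _; exact: sqr_ge0.
  have hmj : `|mu ord0 j| <= \sum_(k < m) `|mu ord0 k|.
    by rewrite (bigD1 j) //= lerDl sumr_ge0.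
  rewrite (_ : z ord0 j = (z ord0 j - mu ord0 j) + mu ord0 j); last by ring.
  apply: le_trans (ler_normD _ _) _; exact: lerD.
have [q Kq qmin] := compact_EVT_min (ex_intro _ mu Kmu) cK (continuous_subspaceW KXi ch).
rewrite inE in Kq.
have hmin : forall z, Xi z -> h q <= h z.
  move=> z Xiz; have [Kz|nKz] := pselect (K z).
    by apply: qmin; rewrite inE.
  apply: le_trans (qmin mu _) _; first by rewrite inE.
  rewrite hmu /h; apply: le_trans (_ : hq z <= _); last first.
    by rewrite lerDl sqr_ge0.
  rewrite leNgt; apply/negP => hz; apply: nKz; split => //; exact: ltW.
have Xiq : Xi q by case: Kq.
pose a j := q ord0 j - mu ord0 j.
set b := P (G q - s).
set tau := s + b.
have b0 : 0 <= b := P0 _.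
have Gqb : G q - s <= b by rewrite /b /P le_max lexx.
have var : forall xi, Xi xi ->
    0 <= \sum_(j < m) a j * (xi ord0 j - q ord0 j) + b * (G xi - tau).
  move=> xi Xixi.
  apply: (@lam_lemma R _ (\sum_(j < m) (xi ord0 j - q ord0 j) ^+ 2 + (G xi - tau) ^+ 2)).
  move=> l /andP[l0 l1].
  pose z := l *: xi + (1 - l) *: q.
  have lint : 0 <= l <= 1 by rewrite ltW.
  have Xiz : Xi z := cvXi xi q l Xixi Xiq lint.
  have hGz : G z <= l * G xi + (1 - l) * G q := cvG xi q l Xixi Xiq lint.
  have zj : forall j, z ord0 j - mu ord0 j = a j + l * (xi ord0 j - q ord0 j).
    by move=> j; rewrite /z /a !mxE; ring.
  have h1 : (1 - l) * (G q - s) <= (1 - l) * b by rewrite ler_wpM2l // subr_ge0.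
  have hP1 : P (G z - s) <= `|b + l * (G xi - tau)|.
    rewrite /P ge_max normr_ge0 andbT; apply: le_trans (ler_norm _).
    rewrite /tau; lra.
  have hP : P (G z - s) ^+ 2 <= (b + l * (G xi - tau)) ^+ 2.
    rewrite -[X in _ <= X]real_normK ?num_real // !expr2.
    by apply: ler_pM => //; exact: P0.
  have hz := hmin z Xiz.
  rewrite /h /hq in hz.
  have e : \sum_(j < m) (z ord0 j - mu ord0 j) ^+ 2 =
      \sum_(j < m) (a j + l * (xi ord0 j - q ord0 j)) ^+ 2.
    by apply: eq_bigr => j _; rewrite zj.
  rewrite e in hz.
  rewrite (@sum_sq_expand R m a (fun j => xi ord0 j - q ord0 j)) in hz.
  have hqq : \sum_(j < m) (q ord0 j - mu ord0 j) ^+ 2 = \sum_(j < m) a j ^+ 2 by [].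
  rewrite hqq -/b in hz.
  rewrite -(pmulr_rge0 _ l0).
  move: hz hP.
  set SA := \sum_(j < m) a j ^+ 2.
  set SAD := \sum_(j < m) a j * (xi ord0 j - q ord0 j).
  set SD := \sum_(j < m) (xi ord0 j - q ord0 j) ^+ 2.
  set T := G xi - tau.
  set PZ := P (G z - s).
  move=> hz hP; nra.
have sumB : forall xi : 'rV[R]_m, \sum_(j < m) a j * (xi ord0 j - q ord0 j) =
    \sum_(j < m) a j * xi ord0 j - \sum_(j < m) a j * q ord0 j.
  by move=> xi; rewrite -sumrB; apply: eq_bigr => j _; ring.
have SAmu : \sum_(j < m) a j * (mu ord0 j - q ord0 j) = - \sum_(j < m) a j ^+ 2.
  by rewrite -sumrN; apply: eq_bigr => j _; rewrite /a; ring.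
have SA0 : 0 <= \sum_(j < m) a j ^+ 2 by apply: sumr_ge0 => j _; exact: sqr_ge0.
have bpos : 0 < b.
  rewrite lt_def b0 andbT; apply/negP => /eqP bz.
  have := var mu Ximu; rewrite SAmu bz mul0r addr0 oppr_ge0 => SAle.
  have SAz : \sum_(j < m) a j ^+ 2 = 0 by apply/eqP; rewrite eq_le SAle SA0.
  have qmu : q = mu.
    apply/rowP => j.
    have := @psumr_eq0P R _ xpredT (fun j => a j ^+ 2) (fun j _ => sqr_ge0 (a j)) SAz j isT.
    by move/eqP; rewrite sqrf_eq0 /a subr_eq0 => /eqP.
  move: bz; rewrite /b qmu /P /s opprB addrCA subrr addr0 max_l ?ltW // => ez.
  by move: e0; rewrite ez ltxx.
have bne : b != 0 by rewrite gt_eqF.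
pose u := (\sum_(j < m) a j * q ord0 j) / b.
pose c : 'rV[R]_m := \row_j (- a j / b).
have sc : forall xi : 'rV[R]_m, \sum_(j < m) c ord0 j * xi ord0 j =
    - (\sum_(j < m) a j * xi ord0 j) / b.
  move=> xi; rewrite mulNr mulr_suml -sumrN; apply: eq_bigr => j _.
  by rewrite /c mxE; ring.
have hu : b * u = \sum_(j < m) a j * q ord0 j by rewrite /u mulrC divfK.
exists (tau + u), c; split.
  move=> xi Xixi; rewrite sc.
  have := var xi Xixi; rewrite sumB.
  set V := \sum_(j < m) a j * xi ord0 j.
  set W := \sum_(j < m) a j * q ord0 j.
  have hv : b * (- V / b) = - V by rewrite mulrC divfK.
  move: hu hv; rewrite -/W; set v := - V / b; move: u => u' hu hv hvar.
  suff : 0 <= b * (G xi - (tau + u' + v)) by rewrite pmulr_rge0 // subr_ge0.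
  rewrite mulrBr !mulrDr hu hv; move: hvar; rewrite /tau /s mulrBr !mulrDr; lra.
rewrite sc.
have := SAmu; rewrite sumB.
set V := \sum_(j < m) a j * mu ord0 j.
set W := \sum_(j < m) a j * q ord0 j.
have hv : b * (- V / b) = - V by rewrite mulrC divfK.
move: hu hv; rewrite -/W; set v := - V / b; move: u => u' hu hv hmu'.
suff : 0 <= b * (tau + u' + v - (G mu - eps)) by rewrite pmulr_rge0 // subr_ge0.
rewrite mulrBr !mulrDr hu hv /tau /s; nra.
Qed.
Lemma jensen (R : realType) (m : nat) (Q : probability (BorelV R m) R)
  (Xi : set 'rV[R]_m) (mu : 'rV[R]_m) :
  closed Xi -> convex_setV Xi -> Q (Xi : set (BorelV R m)) = 1%E ->
  (forall j : 'I_m,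
      Q.-integrable setT (fun z : BorelV R m => (z ord0 j)%:E) /\
      Rintegral Q setT (fun z : BorelV R m => z ord0 j) = mu ord0 j) ->
  Xi mu ->
  forall (G : 'rV[R]_m -> R) (MG : R), (forall z, Xi z -> `|G z| <= MG) ->
  {within Xi, continuous G} -> convex_fun_on Xi G ->
  G mu <= Rintegral Q Xi G.
Proof.
move=> cXi cvXi QXi hmean Ximu G MG hGb cG cvG.
apply/ler_addgt0Pr => e e0.
have [alpha [c [h1 h2]]] := @affine_minorant R m Xi G mu e cXi cvXi cvG cG Ximu e0.
have := @int_ge_affine R m Q Xi mu cXi QXi hmean G MG hGb cG alpha c h1.
move: h2; lra.
Qed.

Lemma slice_cont (R : realType) (n m : nat) (X : set 'rV[R]_n) (Xi : set 'rV[R]_m)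
  (f : 'rV[R]_n -> 'rV[R]_m -> R) (y : 'rV[R]_n) : X y ->
  {within X `*` Xi, continuous (fun p : 'rV[R]_n * 'rV[R]_m => f p.1 p.2)} ->
  {within Xi, continuous (f y)}.
Proof.
move=> Xy /within_ball hc; apply/within_ball => p Xip e e0.
have [d d0 hd] := hc (y, p) (conj Xy Xip) e e0.
exists d => // q Xiq pq.
exact: (hd (y, q) (conj Xy Xiq) (conj (ballxx _ d0) pq)).
Qed.
Lemma dirac_int (R : realType) (m : nat) (Q : probability (BorelV R m) R)
  (Xi : set 'rV[R]_m) (mu : 'rV[R]_m) (f : 'rV[R]_m -> R) :
  closed Xi -> Xi mu ->
  (forall A : set (BorelV R m), measurable A -> Q A = \d_(mu : BorelV R m) A) ->
  {within Xi, continuous f} -> Rintegral Q Xi f = f mu.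
Proof.
move=> cXi Ximu hQ cf.
have mXi : measurable (Xi : set (BorelV R m)) := @closed_measV R m Xi cXi.
rewrite /Rintegral (eq_measure_integral (\d_(mu : BorelV R m))); last first.
  by move=> A mA _; exact: hQ.
rewrite integral_dirac //; last first.
  by apply/measurable_realfun.measurable_EFinP; exact: (@cont_measV R m).
by rewrite diracE mem_set //= mul1r.
Qed.
Theorem corollary1 (R : realType) (n m : nat)
  (X : set 'rV[R]_n) (Xi : set 'rV[R]_m)
  (hXc : closed X) (hXcv : convex_setV X)
  (hXic : closed Xi) (hXicv : convex_setV Xi)
  (beta : R) (hbeta : 0 < beta < 1)
  (phi : 'rV[R]_n -> 'rV[R]_n -> 'rV[R]_m -> R)
  (hphib : exists M : R, forall x y xi, X x -> X y -> Xi xi -> `|phi x y xi| <= M)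
  (hphic : {within [set p : ('rV[R]_n * 'rV[R]_n) * 'rV[R]_m |
                      X p.1.1 /\ X p.1.2 /\ Xi p.2],
            continuous (fun p : ('rV[R]_n * 'rV[R]_n) * 'rV[R]_m =>
                          phi p.1.1 p.1.2 p.2)})
  (Y : 'rV[R]_n -> 'rV[R]_m -> set 'rV[R]_n)
  (hYsub : forall x xi, X x -> Xi xi -> Y x xi `<=` X)
  (hYne : forall x xi, X x -> Xi xi -> Y x xi !=set0)
  (hYcpt : forall x xi, X x -> Xi xi -> compact (Y x xi))
  (hYuhc : forall x xi, X x -> Xi xi -> forall U : set 'rV[R]_n,
      open U -> Y x xi `<=` U ->
      \forall p \near (x, xi), X p.1 -> Xi p.2 -> Y p.1 p.2 `<=` U)
  (hYlhc : forall x xi, X x -> Xi xi -> forall U : set 'rV[R]_n,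
      open U -> Y x xi `&` U !=set0 ->
      \forall p \near (x, xi), X p.1 -> Xi p.2 -> Y p.1 p.2 `&` U !=set0)
  (N : nat) (hN : (0 < N)%N) (xs : 'I_N -> 'rV[R]_m)
  (hxs : forall i, Xi (xs i))
  (P : set (probability (BorelV R m) R))
  (hPsupp : forall Q, P Q -> Q (Xi : set (BorelV R m)) = 1%E)
  (hPmean : forall Q, P Q -> forall j : 'I_m,
      Q.-integrable setT (fun z : BorelV R m => (z ord0 j)%:E) /\
      Rintegral Q setT (fun z : BorelV R m => z ord0 j)
        = ((N%:R)^-1 *: \sum_(i < N) xs i) ord0 j)
  (hPdirac : exists Q, P Q /\ forall A : set (BorelV R m), measurable A ->
      Q A = \d_((N%:R)^-1 *: \sum_(i < N) xs i : BorelV R m) A)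
  (hconv : convexity_preserving X Xi phi beta Y ((N%:R)^-1 *: \sum_(i < N) xs i)) :
  exists v : 'rV[R]_n -> 'rV[R]_m -> R,
    bcont_on X Xi v /\
    DOO_solution X Xi phi beta Y P v /\
    MPC_solution X Xi phi beta Y ((N%:R)^-1 *: \sum_(i < N) xs i) v /\
    (forall w, bcont_on X Xi w ->
       MPC_solution X Xi phi beta Y ((N%:R)^-1 *: \sum_(i < N) xs i) w ->
       forall x xi, X x -> Xi xi -> w x xi = v x xi).
Proof.
have [Mp hp] := hphib.
have /andP[b0 b1] := hbeta.
have hb : 0 <= beta < 1 by rewrite b1 ltW.
set mu := (N%:R)^-1 *: \sum_(i < N) xs i.
have [Q0 [PQ0 hQ0]] := hPdirac.
have Ximu : Xi mu := @dirac_in R m Xi mu Q0 hXic (hPsupp Q0 PQ0) hQ0.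
have [F [Fne [Fb [Fcl [Fcv FB]]]]] := hconv.
have [g [Fg hg]] := @MPC_exists R n m X Xi phi beta Y mu Mp F Ximu hb hp hYsub hYne Fne Fb Fcl FB.
have gb := Fb g Fg.
have [[Mg hMg] gc] := gb.
exists g; split => //; split; last split => //.
  move=> x xi Xx Xxi; rewrite hg //; congr (inf _); apply: eq_imagel => y Yy.
  have Xy : X y := hYsub x xi Xx Xxi y Yy.
  have cgy : {within Xi, continuous (g y)} := @slice_cont R n m X Xi g y Xy gc.
  congr (_ + beta * _).
  have hQ0i : Rintegral Q0 Xi (g y) = g y mu := @dirac_int R m Q0 Xi mu (g y) hXic Ximu hQ0 cgy.
  have jen : forall Q, P Q -> g y mu <= Rintegral Q Xi (g y).
    move=> Q PQ.
    exact: (@jensen R m Q Xi mu hXic hXicv (hPsupp Q PQ) (hPmean Q PQ) Ximu (g y) Mg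
              (fun z Xiz => hMg y z Xy Xiz) cgy (Fcv g y Fg Xy)).
  apply/eqP; rewrite eq_le; apply/andP; split.
    apply: lb_le_inf; first by exists (Rintegral Q0 Xi (g y)), Q0.
    by move=> _ [Q PQ <-]; exact: jen.
  rewrite -hQ0i; apply: ge_inf; last by exists Q0.
  by exists (g y mu) => _ [Q PQ <-]; exact: jen.
move=> w wb hw x xi Xx Xxi.
exact: (@MPC_unique R n m X Xi phi beta Y mu Mp Ximu hb hp hYsub hYne w g wb gb hw hg x xi Xx Xxi).
Qed.
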